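(* Consider Method 2.3 (a modified level method, described in the context) and suppose it does not terminate and the numbers $\varepsilon_k$ satisfy $\varepsilon_k>0$ for all $k\in K$ and $\varepsilon_k\to0$. Then the sequences $\{z_k\},\{\sigma_k\}$ are defined for all $k\in K$ and $\lim_{k\to\infty}f(z_k)=f^*$, $\lim_{k\to\infty}\sigma_k=f^*$.
   Context: Setting: $D\subset\mathbb{R}^n$ convex, closed and bounded (nonempty); $f$ convex on $\mathbb{R}^n$; $f^*=\min_Df$; $X^*=\{x\in D:f(x)=f^*\}$, $x^*\in X^*$ fixed; $K=\{0,1,\dots\}$; $\operatorname{epi}(f,D)=\{(x,\gamma):x\in D,\gamma\ge f(x)\}$; $\partial f(x)$ is the subdifferential. Method 2.3: choose closed convex $M_0\subset\mathbb{R}^{n+1}$ with $\operatorname{epi}(f,D)\subset M_0$, numbers $\varepsilon_0\ge0$, $\alpha_0\le f^*\le\beta_{-1}$, and $\bar\lambda\in(0,1)$; set $\delta_0=+\infty$, $i=k=0$. Step 1: let $(y_i,\gamma_i)$ solve $\min\{\gamma:(x,\gamma)\in M_i,\ x\in D,\ \gamma\ge\alpha_i\}$; if $f(y_i)=\gamma_i$ stop. Step 2: choose $\lambda_i\in(0,\bar\lambda]$; set $\beta_i=\min\{\beta_{i-1},\delta_i\}$, $l_i=(1-\lambda_i)\gamma_i+\lambda_i\beta_i$, and $U_i=\{x\in D:\exists\gamma\le l_i \text{ with }(x,\gamma)\in M_i\}$. Step 3: choose $x_i\in U_i$. Step 4: if $f(x_i)-\gamma_i>\varepsilon_k$ set $Q_i=M_i$;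 otherwise set $i_k=i$, $z_k=x_{i_k}$, $\sigma_k=\gamma_{i_k}$, choose closed convex $Q_i\subset\mathbb{R}^{n+1}$ with $(x^*,f^* )\in Q_i$, choose $\varepsilon_{k+1}\ge0$, $k\leftarrow k+1$. Step 5: $M_{i+1}=Q_i\cap\{(x,\gamma):f(x_i)+\langle a_i,x-x_i\rangle\le\gamma\}$ with $a_i\in\partial f(x_i)$. Step 6: $\alpha_{i+1}=\gamma_i$, $\delta_{i+1}=f(x_i)$; $i\leftarrow i+1$; go to Step 1. *)

(* Defs.v *)
(* points of R^n are row vectors 'rV[R]_n over R : realType;
   points of R^{n+1} are pairs ('rV[R]_n * R). *)
From HB Require Import structures.
From mathcomp Require Import all_boot all_order all_algebra.
From mathcomp Require Import all_classical all_reals all_analysis.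
Set Implicit Arguments. Unset Strict Implicit. Unset Printing Implicit Defensive.
Import Order.TTheory GRing.Theory Num.Theory.
Import numFieldNormedType.Exports.
Local Open Scope classical_set_scope.
Local Open Scope ring_scope.

Definition dotv {R : realType} {n : nat} (a x : 'rV[R]_n) : R :=
  \sum_(j < n) a 0 j * x 0 j.

Definition convex_setv {R : realType} {n : nat} (D : set 'rV[R]_n) : Prop :=
  forall x y t, D x -> D y -> 0 <= t <= 1 -> D (t *: x + (1 - t) *: y).

Definition convex_setp {R : realType} {n : nat} (M : set ('rV[R]_n * R)) : Prop :=
  forall p q t, M p -> M q -> 0 <= t <= 1 ->
    M (t *: p.1 + (1 - t) *: q.1, t * p.2 + (1 - t) * q.2).

Definition convex_funv {R : realType} {n : nat} (f : 'rV[R]_n -> R) : Prop :=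
  forall x y t, 0 <= t <= 1 ->
    f (t *: x + (1 - t) *: y) <= t * f x + (1 - t) * f y.

Definition subgrad {R : realType} {n : nat} (f : 'rV[R]_n -> R) (x a : 'rV[R]_n) : Prop :=
  forall y, f x + dotv a (y - x) <= f y.

Definition epi {R : realType} {n : nat} (f : 'rV[R]_n -> R) (D : set 'rV[R]_n)
  : set ('rV[R]_n * R) := [set p | D p.1 /\ f p.1 <= p.2].

(* Main.v *)
Require Import Defs.
From HB Require Import structures.
From mathcomp Require Import all_boot all_order all_algebra.
From mathcomp Require Import all_classical all_reals all_analysis.
From mathcomp Require Import ring lra zify.
Import Order.TTheory GRing.Theory Num.Theory.
Import numFieldNormedType.Exports.
Local Open Scope classical_set_scope.
Local Open Scope ring_scope.

Lemma coord_le {R : realType} {n : nat} (v : 'rV[R]_n) k : `|v 0 k| <= `|v|.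
Proof.
have /mapP[j Hj ->] : `|v ord0 k| \in [seq `|v x.1 x.2| | x : 'I_1 * 'I_n].
  by apply/mapP; exists (ord0, k) => //=; rewrite mem_enum.
by rewrite [leRHS]/Num.norm /= mx_normrE; apply/bigmax_geP; right => /=; exists j.
Qed.

Lemma coord_ball {R : realType} {n : nat} (p q : 'rV[R]_n) e k : ball p e q -> `|p 0 k - q 0 k| < e.
Proof.
rewrite mx_norm_ball /ball_ => h.
have := coord_le (p - q) k; rewrite !mxE => h'; exact: le_lt_trans h' h.
Qed.

Lemma dotv_delta {R : realType} {n : nat} (a : 'rV[R]_n) (s : R) k :
  dotv a (s *: delta_mx 0 k) = s * a 0 k.
Proof.
rewrite /dotv (bigD1 k) //= big1 => [|j /negbTE jk]; rewrite !mxE ?eqxx ?jk /=.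
  by rewrite mulr1 addr0 mulrC.
by rewrite mulr0 mulr0.
Qed.

Lemma dotv_bound {R : realType} {n : nat} (a d : 'rV[R]_n) A del :
  (forall k, `|a 0 k| <= A) -> (forall k, `|d 0 k| <= del) ->
  `|dotv a d| <= n%:R * (A * del).
Proof.
move=> ha hd; rewrite /dotv; apply: le_trans (ler_norm_sum _ _ _) _.
apply: le_trans (_ : \sum_(j < n) (A * del) <= _).
  apply: ler_sum => j _; rewrite normrM; apply: ler_pM => //.
rewrite sumr_const card_ord; by rewrite mulr_natl.
Qed.

Lemma line_bound {R : realType} {n : nat} (f : 'rV[R]_n -> R) (e : 'rV[R]_n) (c s : R) :
  convex_funv f -> 0 < c -> `|s| <= c ->
  f (s *: e) <= Order.max (f (c *: e)) (f (- c *: e)).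
Proof.
move=> cf c0 sc.
set t := (s + c) / (2 * c).
have t0 : 0 <= t <= 1.
  move: sc; rewrite ler_norml => /andP[h1 h2].
  rewrite /t; apply/andP; split.
    by apply: divr_ge0; lra.
  by rewrite ler_pdivrMr; lra.
have -> : s *: e = t *: (c *: e) + (1 - t) *: (- c *: e).
  rewrite !scalerA -scalerDl; congr (_ *: _).
  rewrite /t; field; lra.
apply: le_trans (cf _ _ _ t0) _.
case/andP: t0 => t0 t1.
have m1 : f (c *: e) <= Order.max (f (c *: e)) (f (- c *: e)) by rewrite le_max lexx.
have m2 : f (- c *: e) <= Order.max (f (c *: e)) (f (- c *: e)) by rewrite le_max lexx orbT.
apply: le_trans (_ : t * Order.max (f (c *: e)) (f (- c *: e)) + (1 - t) * Order.max (f (c *: e)) (f (- c *: e)) <= _).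
  by apply: lerD; apply: ler_wpM2l => //; lra.
by rewrite -mulrDl addrC subrK mul1r.
Qed.

Lemma box_bound {R : realType} {n : nat} (f : 'rV[R]_n -> R) : convex_funv f ->
  forall m (r : R), exists B, forall v : 'rV[R]_n, (forall k, `|v 0 k| <= r) ->
    (forall k : 'I_n, (m <= k)%N -> v 0 k = 0) -> f v <= B.
Proof.
move=> cf; elim=> [|m IH] r.
  exists (f 0) => v _ h0.
  suff -> : v = 0 by [].
  by apply/rowP => k; rewrite mxE; apply: h0.
case: (ltnP m n) => [hm|hm]; last first.
  have [B HB] := IH r; exists B => v hv h0; apply: HB => // k mk.
  by have := ltn_ord k; lia.
have [B1 HB1] := IH (2 * r).
set km := Ordinal hm.
set e : 'rV[R]_n := delta_mx 0 km.
set c := 2 * `|r| + 1.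
have c0 : 0 < c by rewrite /c; have := normr_ge0 r; lra.
exists (B1 / 2 + Order.max (f (c *: e)) (f (- c *: e)) / 2) => v hv h0.
set s := v 0 km.
set w := v - s *: e.
have -> : v = (1/2 : R) *: (2 *: w) + (1 - 1/2) *: ((2 * s) *: e).
  by apply/rowP => k; rewrite /w !mxE; field.
have half : (0 <= (1/2 : R)) && ((1/2 : R) <= 1) by apply/andP; split; lra.
apply: le_trans (cf (2 *: w) ((2 * s) *: e) _ half) _.
have h1 : f (2 *: w) <= B1.
  apply: HB1 => k; rewrite /w !mxE.
    have hvk := hv k.
    case: (eqVneq k km) => [->|kk]; rewrite ?eqxx ?(negbTE kk) /= ?mulr1 ?mulr0 ?subr0.
      by rewrite /s subrr mulr0 normr0; have := normr_ge0 (v 0 km); have := hv km; lra.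
    by rewrite normrM ger0_norm //; lra.
  move=> mk; case: (eqVneq k km) => [->|kk]; rewrite ?eqxx ?(negbTE kk) /= ?mulr1 ?mulr0 ?subr0.
    by rewrite /s subrr mulr0.
  have : (m < k)%N.
    rewrite ltn_neqAle mk andbT; apply/eqP => mk'.
    by move/eqP: kk; apply; apply/val_inj.
  by move=> /h0 ->; rewrite mulr0.
have h2 : f ((2 * s) *: e) <= Order.max (f (c *: e)) (f (- c *: e)).
  apply: line_bound => //.
  rewrite normrM ger0_norm //; have := hv km; rewrite -/s.
  have := ler_norm r; rewrite /c; lra.
lra.
Qed.

Theorem theorem2p3p3 (R : realType) (n : nat)
  (D : set 'rV[R]_n) (f : 'rV[R]_n -> R) (xstar : 'rV[R]_n)
  (M Q : nat -> set ('rV[R]_n * R))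
  (y x a : nat -> 'rV[R]_n)
  (gamma alpha beta lam l eps : nat -> R)
  (betam1 lambar : R) (kk : nat -> nat) :
  (* standing assumptions *)
  convex_setv D -> closed D -> bounded_set D -> D !=set0 ->
  convex_funv f ->
  D xstar -> (forall z, D z -> f xstar <= f z) ->
  (* initialization *)
  closed (M 0) -> convex_setp (M 0) -> epi f D `<=` M 0 ->
  alpha 0 <= f xstar -> f xstar <= betam1 ->
  0 < lambar < 1 ->
  kk 0 = 0%N ->
  (* Step 1 and non-termination *)
  (forall i, [/\ M i (y i, gamma i), D (y i), alpha i <= gamma i &
     forall z g, M i (z, g) -> D z -> alpha i <= g -> gamma i <= g]) ->
  (forall i, f (y i) <> gamma i) ->
  (* Step 2 *)
  (forall i, 0 < lam i <= lambar) ->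
  beta 0 = betam1 ->
  (forall i, beta i.+1 = Order.min (beta i) (f (x i))) ->
  (forall i, l i = (1 - lam i) * gamma i + lam i * beta i) ->
  (* Step 3 : x_i in U_i *)
  (forall i, D (x i) /\ exists g, g <= l i /\ M i (x i, g)) ->
  (* Step 4 *)
  (forall i, eps (kk i) < f (x i) - gamma i -> Q i = M i /\ kk i.+1 = kk i) ->
  (forall i, f (x i) - gamma i <= eps (kk i) ->
     [/\ closed (Q i), convex_setp (Q i), Q i (xstar, f xstar) & kk i.+1 = (kk i).+1]) ->
  (* Step 5 *)
  (forall i, subgrad f (x i) (a i)) ->
  (forall i, M i.+1 = Q i `&` [set p | f (x i) + dotv (a i) (p.1 - x i) <= p.2]) ->
  (* Step 6 *)
  (forall i, alpha i.+1 = gamma i) ->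
  (* assumptions on eps_k *)
  (forall k, 0 < eps k) -> eps @ \oo --> 0 ->
  (* conclusion: z_k, sigma_k defined for all k, and the limits *)
  (forall k, exists i, kk i = k /\ f (x i) - gamma i <= eps (kk i)) /\
  (forall ik : nat -> nat,
     (forall k, kk (ik k) = k /\ f (x (ik k)) - gamma (ik k) <= eps (kk (ik k))) ->
     (fun k => f (x (ik k))) @ \oo --> f xstar /\
     (fun k => gamma (ik k)) @ \oo --> f xstar).
Proof.
move=> cD clD bD D0 cf Dxs fmin clM0 cvM0 epiM0 a0 fb lb kk0 S1 nonterm Hlam b0 bS Hl
  S3 S4a S4b Hsub HM Halpha eps0 epscv.
set fs := f xstar.
have Mxs : forall i, M i (xstar, fs).
  elim=> [|i IH]; first by apply: epiM0; split.
  rewrite HM; split; last by have := Hsub i xstar.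
  case: (leP (f (x i) - gamma i) (eps (kk i))) => h.
    by case: (S4b i h).
  by rewrite (S4a i h).1.
have ga : forall i, alpha i <= fs /\ gamma i <= fs.
  elim=> [|i [IHa IHg]].
    split=> //; case: (S1 0%N) => _ _ _ hmin; exact: hmin _ _ (Mxs 0%N) Dxs a0.
  have ai : alpha i.+1 <= fs by rewrite Halpha.
  split=> //; case: (S1 i.+1) => _ _ _ hmin; exact: hmin _ _ (Mxs _) Dxs ai.
have gmono : forall i j, (i <= j)%N -> gamma i <= gamma j.
  move=> i j /subnK <-; elim: (j - i)%N => [|d IH]; first by rewrite add0n.
  apply: le_trans IH _; rewrite addSn; case: (S1 (d + i).+1) => _ _ h _.
  by rewrite Halpha in h.
have fx : forall i, fs <= f (x i) by move=> i; apply: fmin; case: (S3 i).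
have bmono : forall i j, (i < j)%N -> beta j <= f (x i).
  move=> i j /subnK <-; elim: (j - i.+1)%N => [|d IH].
    by rewrite add0n bS ge_min lexx orbT.
  by rewrite addSn bS ge_min IH.
pose crit i := f (x i) - gamma i <= eps (kk i).
have C : forall i0, exists j, (i0 <= j)%N /\ crit j.
  move=> i0; apply: contrapT => hno.
  have nc : forall j, (i0 <= j)%N -> eps (kk j) < f (x j) - gamma j.
    move=> j ij; rewrite ltNge; apply/negP => hc; apply: hno; exists j; split; [exact: ij | exact: hc].
  have kconst : forall j, (i0 <= j)%N -> kk j = kk i0.
    move=> j /subnK <-; elim: (j - i0)%N => [|d IH]; first by rewrite add0n.
    by rewrite addSn (S4a _ (nc _ (leq_addl _ _))).2.
  have Qconst : forall j, (i0 <= j)%N -> Q j = M j.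
    by move=> j ij; rewrite (S4a _ (nc _ ij)).1.
  have cut : forall i j, (i0 <= i)%N -> (i < j)%N ->
      M j `<=` [set p | f (x i) + dotv (a i) (p.1 - x i) <= p.2].
    move=> i j hi /subnK <-; elim: (j - i.+1)%N => [|d IH].
      by rewrite add0n HM => p [_ h].
    rewrite addSn HM Qconst; last by apply: leq_trans hi _; apply: leq_trans (leq_addl d _); apply: leqnSn.
    by move=> p [hp _]; exact: IH p hp.
  set e := eps (kk i0).
  have e0 : 0 < e := eps0 _.
  have hsup : has_sup (range gamma).
    split; first by exists (gamma 0%N); exists 0%N.
    by exists fs => _ [i _ <-]; exact (ga i).2.
  have e20 : 0 < e / 2 by apply: divr_gt0.
  have [_ [i' _ <-] hi'] := sup_adherent e20 hsup.
  set i1 := maxn i0 i'.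
  have gdiff : forall i j, (i1 <= i)%N -> gamma j - gamma i < e / 2.
    move=> i j hi.
    have h1 : gamma j <= sup (range gamma) by apply: (ub_le_sup hsup.2); by exists j.
    have h2 : gamma i' <= gamma i by apply: gmono; apply: leq_trans hi; exact: leq_maxr.
    lra.
  set c := (1 - lambar) * (e / 2).
  have c0 : 0 < c by apply: mulr_gt0 => //; lra.
  have key : forall i j, (i1 <= i)%N -> (i < j)%N -> c <= - dotv (a i) (x j - x i).
    move=> i j hi ij.
    have hi0 : (i0 <= i)%N by apply: leq_trans hi; exact: leq_maxl.
    case: (S3 j) => _ [g [gl Mg]].
    have hc := cut i j hi0 ij _ Mg; rewrite /= in hc.
    have hb := bmono i j ij.
    have hgj := (ga j).2.
    have hfi := fx i.
    have hnc := nc i hi0; rewrite (kconst i hi0) -/e in hnc.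
    have hgd := gdiff i j hi.
    have [l0 l1] := andP (Hlam j).
    have p1 : 0 <= lam j * (f (x i) - beta j) by apply: mulr_ge0; lra.
    have p2 : (1 - lambar) * (e / 2) <= (1 - lam j) * (f (x i) - gamma j).
      apply: ler_pM; lra.
    rewrite Hl in gl; rewrite /c; lra.
  move: (bD) => [r0 [_ hr]].
  set r := r0 + 1.
  have hD : forall z, D z -> forall k, `|z 0 k| <= r.
    move=> z Dz k; apply: le_trans (coord_le z k) _.
    by apply: (hr r _ z Dz); rewrite /r ltrDl.
  have [B HB] := @box_bound R n f cf n (r + 1).
  set A := `|B - fs|.
  have ha : forall i k, `|a i 0 k| <= A.
    move=> i k.
    have hs : forall s : R, `|s| = 1 -> s * a i 0 k <= B - fs.
      move=> s s1.
      set yy := x i + s *: delta_mx 0 k.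
      have := Hsub i yy.
      have -> : yy - x i = s *: delta_mx 0 k by rewrite /yy addrAC subrr add0r.
      rewrite dotv_delta => h1.
      have h2 : f yy <= B.
        apply: HB; last by move=> m hm; have := ltn_ord m; lia.
        move=> m; rewrite /yy !mxE; apply: le_trans (ler_normD _ _) _.
        apply: lerD; first by apply: hD; case: (S3 i).
        by case: (_ && _); rewrite ?mulr1 ?mulr0 ?normr0 ?s1 //.
      have := fx i; lra.
    have h1 := hs 1 (normr1 _).
    have h2 : -1 * a i 0 k <= B - fs by apply: hs; rewrite normrN normr1.
    apply: le_trans (_ : B - fs <= A); last exact: ler_norm.
    rewrite ler_norml; lra.
  have A0 : 0 <= A by apply: normr_ge0.
  set K := n%:R * A.
  have K0 : 0 <= K by apply: mulr_ge0.
  set eps' := c / (2 * (K + 1)).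
  have eps'0 : 0 < eps' by apply: divr_gt0 => //; lra.
  have hF : (x @ \oo) D by exists 0%N => // i _; case: (S3 i).
  have [p [Dp clp]] := bounded_closed_compact bD clD _ hF.
  have pick : forall N, exists2 i, (N <= i)%N & ball p eps' (x i).
    move=> N.
    have := clp [set z | exists2 i, (N <= i)%N & z = x i] (ball p eps') _ (nbhsx_ballx p eps' eps'0).
    case.
      by exists N => // i /= Ni; exists i.
    by move=> z [[i Ni ->] hb]; exists i.
  have [i hi bi] := pick i1.
  have [j hj bj] := pick i.+1.
  have hk := key i j hi hj.
  have hbd : `|dotv (a i) (x j - x i)| <= n%:R * (A * (2 * eps')).
    apply: dotv_bound => // k; rewrite !mxE.
    have := coord_ball p (x j) eps' k bj; have := coord_ball p (x i) eps' k bi.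
    move=> h1 h2.
    have -> : x j 0 k - x i 0 k = (p 0 k - x i 0 k) - (p 0 k - x j 0 k) by ring.
    apply: le_trans (ler_normB _ _) _; lra.
  have hlt : n%:R * (A * (2 * eps')) < c.
    have -> : n%:R * (A * (2 * eps')) = (K * c) / (K + 1).
      rewrite /eps' mulrA -/K. field; lra.
    rewrite ltr_pdivrMr; last lra.
    have : 0 < K * c + c by have := mulr_ge0 K0 (ltW c0); lra.
    lra.
  have := ler_norm (- dotv (a i) (x j - x i)); rewrite normrN.
  lra.
have step : forall d i, crit (i + d)%N -> exists j, [/\ (i <= j)%N, kk j = kk i & crit j].
  elim=> [|d IH] i h.
    by exists i; rewrite addn0 in h.
  case: (boolP (crit i)) => hi; first by exists i.
  have hk : kk i.+1 = kk i.
    by apply: (S4a i _).2; rewrite ltNge.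
  have [j [ij kj cj]] : exists j, [/\ (i.+1 <= j)%N, kk j = kk i.+1 & crit j].
    by apply: IH; rewrite addSnnS.
  by exists j; split => //; [apply: ltnW | rewrite kj].
have reach : forall k, exists i, kk i = k.
  elim=> [|k [i ki]]; first by exists 0%N.
  have [j [ij cj]] := C i.
  have [j' [_ kj' cj']] : exists j', [/\ (i <= j')%N, kk j' = kk i & crit j'].
    by apply: (step (j - i)%N i); rewrite subnKC.
  exists j'.+1; case: (S4b j' cj') => _ _ _ ->; by rewrite kj' ki.
split.
  move=> k; have [i ki] := reach k.
  have [j [ij cj]] := C i.
  have [j' [_ kj' cj']] : exists j', [/\ (i <= j')%N, kk j' = kk i & crit j'].
    by apply: (step (j - i)%N i); rewrite subnKC.
  by exists j'; split => //; rewrite kj'.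
move=> ik hik.
have bnd : forall k, `|fs - f (x (ik k))| <= eps k /\ `|fs - gamma (ik k)| <= eps k.
  move=> k; have [hk hc] := hik k; rewrite hk in hc.
  have := fx (ik k); have := (ga (ik k)).2.
  move=> h1 h2; split; rewrite ler_norml; apply/andP; split; lra.
have conv : forall u : nat -> R, (forall k, `|fs - u k| <= eps k) -> u @ \oo --> fs.
  move=> u hu; apply/cvgrPdist_le => ep ep0.
  move/cvgrPdist_le: epscv => /(_ ep ep0).
  apply: filterS => k; rewrite sub0r normrN => h.
  apply: le_trans (hu k) _; apply: le_trans (ler_norm _) h.
split; apply: conv => k; [exact: (bnd k).1 | exact: (bnd k).2].
Qed.
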